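(* Let $G$ be a finite set. Sesquiunital sesquialgebra structures of finite free type on $k^G$ (up to isomorphism of the coproduct bimodule and counit module) are in one-to-one correspondence with unital ring structures on the free abelian group $\mathbb Z^G$ (with basis $G$) whose structure constants and whose unit's coordinates are all nonnegative integers; the correspondence sends $(\boldsymbol\Delta,\boldsymbol\epsilon)$ to the multiplication $h\cdot k=\sum_g d^g_{hk}\,g$ with unit $e=\sum_g e^g g$.
   Context: $k$ is a field, $\otimes=\otimes_k$. $G$ is a finite set, $A=k^G$ is the commutative algebra of $k$-valued functions on $G$ (pointwise operations); identify $A^{\otimes r}$ with $k^{G^r}$ and $A^{op}$ with $A$; $\delta_x$ is the characteristic function of $x$. A sesquiunital sesquialgebra on $A$ is an $(A\otimes A,A)$-bimodule $\boldsymbol\Delta$ and a right $A$-module $\boldsymbol\epsilon$ with $(A\otimes\boldsymbol\Delta)\otimes_{A\otimes A}\boldsymbol\Delta\cong(\boldsymbol\Delta\otimes A)\otimes_{A\otimes A}\boldsymbol\Delta$ and $(\boldsymbol\epsilon\otimes A)\otimes_{A\otimes A}\boldsymbol\Delta\cong A\cong(A\otimes\boldsymbol\epsilon)\otimes_{A\otimes A}\boldsymbol\Delta$ as bimodules. Since $\boldsymbol\Delta$ is a $k^{G^3}$-module, $\boldsymbol\Delta=\bigoplus_{g,h,k\in G}\boldsymbol\Delta^g_{hk}$ with $\boldsymbol\Delta^g_{hk}=(\delta_h\otimes\delta_k)\boldsymbol\Delta\,\delta_g$; similarly $\boldsymbol\epsilon=\bigoplus_g\boldsymbol\epsilon^g$,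 $\boldsymbol\epsilon^g=\boldsymbol\epsilon\,\delta_g$. The structure is of finite free type if all these components are finite-dimensional; put $d^g_{hk}=\dim\boldsymbol\Delta^g_{hk}$ and $e^g=\dim\boldsymbol\epsilon^g$. *)

(* Defs.v *)
From HB Require Import structures.
From mathcomp Require Import all_boot all_order all_algebra.
From mathcomp Require Export mxtens.

Set Implicit Arguments.
Unset Strict Implicit.
Unset Printing Implicit Defensive.

Import GRing.Theory.
Local Open Scope ring_scope.

(* For a finite set X, k^X is the algebra of k-valued functions on X; for     *)
(* finite L, R an (k^L, k^R)-bimodule (k acting centrally) is the same thing  *)
(* as a k^(L*R)-module.  With A = k^G we identify A^{(x)r} = k^(G^r) as in    *)
(* the paper (using iterated pair types).  Modules of "finite free type" are  *)
(* finite dimensional (G is finite), so we realise their underlying space as  *)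
(* row vectors 'rV[k]_n, the module acting on the right (v |-> v *m _).       *)
(* A module is recorded by the images fop M x of the basis idempotents        *)
(* delta_x of k^X; the action of f in k^X is  fact M f = \sum_x f x *: fop M x *)

Section Defs.
Variable k : fieldType.

Record fmod (X : finType) := FMod { fdim : nat; fop : X -> 'M[k]_fdim }.

Definition fact (X : finType) (M : fmod X) (f : {ffun X -> k}) : 'M[k]_(fdim M) :=
  \sum_x f x *: fop M x.

Definition is_fmod (X : finType) (M : fmod X) : Prop :=
  (forall f g : {ffun X -> k},
      fact M [ffun x => f x * g x] = fact M f *m fact M g)
  /\ fact M [ffun=> 1] = 1%:M.

(* A quotient of a finite-dimensional k^X-module: the space 'rV_qdim modulo  *)
(* the row space of qsub, with action induced by qop (which is assumed to    *)
(* preserve qsub in the constructions below).                                *)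
Record qmod (X : finType) := QMod { qdim : nat; qsub : 'M[k]_qdim; qop : X -> 'M[k]_qdim }.

Definition qmod_of (X : finType) (M : fmod X) : qmod X := @QMod X (fdim M) 0 (fop M).

(* Isomorphism of the quotient modules M and N, where the index types are     *)
(* identified through the bijection f : X -> Y (i.e. through the algebra      *)
(* isomorphism delta_x |-> delta_(f x)).  F is a linear map inducing a        *)
(* bijection of the quotients which is equivariant.                           *)
Definition qiso (X Y : finType) (f : X -> Y) (M : qmod X) (N : qmod Y) : Prop :=
  exists F : 'M[k]_(qdim M, qdim N),
    [/\ (qsub M *m F <= qsub N)%MS,
        forall x, qop M x *m F = F *m qop N (f x),
        (1%:M <= F + qsub N)%MS
      & forall v : 'rV[k]_(qdim M), (v *m F <= qsub N)%MS -> (v <= qsub M)%MS].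

Definition etens (L1 R1 L2 R2 : finType) (M : fmod (L1 * R1)%type) (N : fmod (L2 * R2)%type)
  : fmod ((L1 * L2) * (R1 * R2))%type :=
  @FMod _ (fdim M * fdim N)
    (fun x => fop M (x.1.1, x.2.1) *t fop N (x.1.2, x.2.2)).

Definition lact (L R : finType) (M : fmod (L * R)%type) (l : L) : 'M[k]_(fdim M) :=
  \sum_(r : R) fop M (l, r).
Definition ract (L R : finType) (M : fmod (L * R)%type) (r : R) : 'M[k]_(fdim M) :=
  \sum_(l : L) fop M (l, r).

(* Tensor product over k^Mi of an (L,Mi)-bimodule M and an (Mi,R)-bimodule N: *)
(* M (x)_k N modulo the span of all  m.b (x) n - m (x) b.n  (b = delta_y      *)
(* suffices by linearity), with the induced (L,R)-bimodule structure.        *)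
Definition tens_over (L Mi R : finType) (M : fmod (L * Mi)%type) (N : fmod (Mi * R)%type)
  : qmod (L * R)%type :=
  @QMod _ (fdim M * fdim N)
    (\sum_(y : Mi) (ract M y *t (1%:M : 'M[k]_(fdim N))
                   - (1%:M : 'M[k]_(fdim M)) *t lact N y))%MS
    (fun x => lact M x.1 *t ract N x.2).

(* the regular (A,A)-bimodule A = k^G, with basis delta_c (c : G) *)
Definition regA (G : finType) : fmod (G * G)%type :=
  @FMod _ #|G| (fun x => if x.1 == x.2
                          then delta_mx (enum_rank x.1) (enum_rank x.1) else 0).

(* a right A-module viewed as a (k, A)-bimodule  (k = k^unit) *)
Definition as_right (G : finType) (E : fmod G) : fmod (unit * G)%type :=
  @FMod _ (fdim E) (fun x => fop E x.2).

Section Sesqui.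
Variable G : finType.

(* Delta : (A(x)A, A)-bimodule, index ((h,k),g) ; Eps : right A-module. *)
Definition assoc_idx (x : ((G * (G * G)) * G)%type) : (((G * G) * G) * G)%type :=
  (((x.1.1, x.1.2.1), x.1.2.2), x.2).
Definition lunit_idx (x : ((unit * G) * G)%type) : (G * G)%type := (x.1.2, x.2).
Definition runit_idx (x : ((G * unit) * G)%type) : (G * G)%type := (x.1.1, x.2).

Definition sesquialgebra (D : fmod ((G * G) * G)%type) (E : fmod G) : Prop :=
  [/\ is_fmod D, is_fmod E,
      (* (A (x) D) (x)_{A(x)A} D  ~=  (D (x) A) (x)_{A(x)A} D *)
      qiso assoc_idx (tens_over (etens (regA G) D) D)
                     (tens_over (etens D (regA G)) D),
      (* (E (x) A) (x)_{A(x)A} D  ~=  A *)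
      qiso lunit_idx (tens_over (etens (as_right E) (regA G)) D) (qmod_of (regA G))
    & (* (A (x) E) (x)_{A(x)A} D  ~=  A *)
      qiso runit_idx (tens_over (etens (regA G) (as_right E)) D) (qmod_of (regA G))].

Definition dcoef (D : fmod ((G * G) * G)%type) (h k0 g : G) : nat := \rank (fop D ((h, k0), g)).
Definition ecoef (E : fmod G) (g : G) : nat := \rank (fop E g).

Definition sesqui_iso (D D' : fmod ((G * G) * G)%type) (E E' : fmod G) : Prop :=
  qiso id (qmod_of D) (qmod_of D') /\ qiso id (qmod_of E) (qmod_of E').

Definition ZG := {ffun G -> int}.
Definition gbasis (g : G) : ZG := [ffun x => (x == g)%:Z].

Definition unital_ring_on (mul : ZG -> ZG -> ZG) (e : ZG) : Prop :=
  [/\ forall a b c, mul (a + b) c = mul a c + mul b c,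
      forall a b c, mul a (b + c) = mul a b + mul a c,
      forall a b c, mul (mul a b) c = mul a (mul b c),
      forall a, mul e a = a
    & forall a, mul a e = a].

Definition nonneg_consts (mul : ZG -> ZG -> ZG) (e : ZG) : Prop :=
  (forall h k0 g, 0 <= mul (gbasis h) (gbasis k0) g) /\ (forall g, 0 <= e g).

Definition mul_of (D : fmod ((G * G) * G)%type) (a b : ZG) : ZG :=
  [ffun g => \sum_(h : G) \sum_(k0 : G) a h * b k0 * (dcoef D h k0 g)%:Z].
Definition unit_of (E : fmod G) : ZG := [ffun g => (ecoef E g)%:Z].

End Sesqui.
End Defs.

(* Main.v *)
Require Import Defs.
From HB Require Import structures.
From mathcomp Require Import all_boot all_order all_algebra zify ring.
Set Implicit Arguments.
Unset Strict Implicit.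
Unset Printing Implicit Defensive.
Import GRing.Theory Num.Theory.
Local Open Scope ring_scope.

Section LA.
Variable k : fieldType.

Definition good n (X : finType) (P : X -> 'M[k]_n) :=
  (forall x y, P x *m P y = if x == y then P x else 0) /\ \sum_x P x = 1%:M.

Lemma idem_sub n m (P : 'M[k]_n) (B : 'M[k]_(m,n)) :
  P *m P = P -> (B <= P)%MS -> B *m P = B.
Proof. by move=> PP /submxP[D ->]; rewrite -mulmxA PP. Qed.

Lemma good_idem n (X : finType) (P : X -> 'M[k]_n) x : good P -> P x *m P x = P x.
Proof. by case=> h _; rewrite h eqxx. Qed.

Lemma good_orth n (X : finType) (P : X -> 'M[k]_n) x y : good P -> x != y -> P x *m P y = 0.
Proof. by case=> h _ /negPf nxy; rewrite h nxy. Qed.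

Lemma lemD n m (X : finType) (P : X -> 'M[k]_n) (W : 'M[k]_(m,n)) :
  good P -> (forall x, W *m P x <= W)%MS -> \rank W = (\sum_x \rank (W *m P x))%N.
Proof.
move=> gP sW.
have dx : mxdirect (\sum_x <<W *m P x>>)%MS.
  apply/mxdirect_sumsP => x _; apply/eqP; rewrite -submx0.
  set Z := (_ :&: _)%MS.
  have ZP : Z *m P x = Z.
    apply: idem_sub; first exact: good_idem.
    apply: submx_trans (capmxSl _ _) _; rewrite genmxE; apply: submxMl.
  rewrite -ZP.
  have : (Z <= \sum_(j | true && (j != x)) <<W *m P j>>)%MS by apply: capmxSr.
  move=> /(submxMr (P x)) /submx_trans; apply.
  rewrite sumsmxMr.
  apply/sumsmx_subP => j /= njx.
  rewrite (eqmxMr _ (genmxE _)) -mulmxA good_orth // mulmx0.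
  by rewrite sub0mx.
have eqW : (W :=: \sum_x <<W *m P x>>)%MS.
  apply/eqmxP/andP; split; last by apply/sumsmx_subP => x _; rewrite genmxE; exact: sW.
  rewrite -[W in (W <= _)%MS]mulmx1; case: gP => _ <-.
  rewrite mulmx_sumr; apply: summx_sub_sums => x _; rewrite genmxE; exact: submx_refl.
rewrite eqW; move/mxdirectP: dx => /= ->.
by apply: eq_bigr => x _; rewrite mxrank_gen.
Qed.

Lemma lemK n (P S : 'M[k]_n) :
  P *m P = P -> (S *m P <= S)%MS ->
  \rank (P *m cokermx S) = (\rank P - \rank (S *m P))%N.
Proof.
move=> PP sS.
have := mxrank_mul_ker P (cokermx S) => <-.
suff -> : \rank (P :&: kermx (cokermx S))%MS = \rank (S *m P) by rewrite addnK.
apply/eqmx_rank/andP; split.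
  set Z := (_ :&: _)%MS.
  have ZP : Z *m P = Z by apply: idem_sub => //; apply: capmxSl.
  rewrite -ZP submxMr //.
  have : (Z <= kermx (cokermx S))%MS by apply: capmxSr.
  by rewrite sub_kermx submxE.
by rewrite sub_capmx submxMl sub_kermx -submxE.
Qed.

End LA.

Section Q.
Variable k : fieldType.

Definition goodq (X : finType) (Q : qmod k X) :=
  good (qop Q) /\ forall x, (qsub Q *m qop Q x <= qsub Q)%MS.
Definition dq (X : finType) (Q : qmod k X) x :=
  \rank (qop Q x *m cokermx (qsub Q)).

Lemma sumnB_le (X : finType) (a b : X -> nat) :
  (forall x, b x <= a x)%N ->
  (\sum_x (a x - b x) = \sum_x a x - \sum_x b x)%N.
Proof.
move=> h; apply/eqP; rewrite eq_sym -(eqn_add2r (\sum_x b x)) subnK; last first.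
  by apply: leq_sum => x _; exact: h.
by rewrite -big_split /=; apply/eqP/eq_bigr => x _; rewrite subnK.
Qed.

Lemma dq_sum (X : finType) (Q : qmod k X) :
  goodq Q -> (\sum_x dq Q x)%N = \rank (cokermx (qsub Q)).
Proof.
case=> gP sS; rewrite /dq.
under eq_bigr => x _ do rewrite lemK ?(good_idem _ gP) ?sS //.
rewrite sumnB_le; last by move=> x; apply: mxrankM_maxr.
rewrite mxrank_coker; congr (_ - _)%N.
  have -> : (\sum_x \rank (qop Q x))%N = \rank (1%:M : 'M[k]_(qdim Q)).
    by rewrite (lemD gP (fun x => submx1 _)); apply: eq_bigr => x _; rewrite mul1mx.
  by rewrite mxrank1.
by rewrite -(lemD gP sS).
Qed.

Lemma ker_coker n m (S : 'M[k]_(m,n)) : (kermx (cokermx S) :=: S)%MS.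
Proof.
apply/eqmxP/andP; split; first by rewrite submxE mulmx_ker.
by rewrite sub_kermx mulmx_coker.
Qed.

Lemma rank_mul_ker_eq m n p p' (A : 'M[k]_(m,n)) (B : 'M[k]_(n,p)) (B' : 'M[k]_(n,p')) :
  (kermx B :=: kermx B')%MS -> \rank (A *m B) = \rank (A *m B').
Proof.
move=> e.
have h1 := mxrank_mul_ker A B; have h2 := mxrank_mul_ker A B'.
have : \rank (A :&: kermx B)%MS = \rank (A :&: kermx B')%MS.
  by apply/eqmx_rank/eqmxP; exact: cap_eqmx (eqmx_refl A) e.
move=> e2; rewrite e2 in h1; move: h1; rewrite -h2 => /eqP; rewrite eqn_add2r.
by move/eqP.
Qed.

Lemma pointwise_eq (X : finType) (a b : X -> nat) :
  (forall x, a x <= b x)%N -> (\sum_x b x <= \sum_x a x)%N -> forall x, a x = b x.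
Proof.
move=> h hs x; apply/eqP; rewrite eqn_leq h /=; apply/negP => /negP; rewrite -ltnNge => lt.
move: hs; rewrite (bigD1 x) //= [X in (_ <= X)%N](bigD1 x) //=.
have : (\sum_(j | j != x) a j <= \sum_(j | j != x) b j)%N by apply: leq_sum => j _; exact: h.
lia.
Qed.

Lemma sum_bij (X Y : finType) (f : X -> Y) (F : Y -> nat) :
  bijective f -> (\sum_x F (f x) = \sum_y F y)%N.
Proof. by move=> bf; rewrite [RHS](reindex f) //; exact: onW_bij. Qed.

Lemma qiso_dq (X Y : finType) (f : X -> Y) (M : qmod k X) (N : qmod k Y) :
  goodq M -> goodq N -> bijective f -> qiso f M N -> forall x, dq M x = dq N (f x).
Proof.
move=> gM gN bf [F [c1 c2 c3 c4]].
set SM := qsub M; set SN := qsub N.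
have kerF : (kermx (F *m cokermx SN) :=: kermx (cokermx SM))%MS.
  apply: eqmx_trans (eqmx_sym (ker_coker SM)).
  apply/eqmxP/andP; split.
    apply/row_subP => i; apply: c4; rewrite -row_mul.
    apply: submx_trans (row_sub _ _) _.
    by rewrite submxE -mulmxA mulmx_ker.
  by rewrite sub_kermx mulmxA -submxE.
have rk A : \rank (A *m cokermx SM) = \rank (A *m (F *m cokermx SN)).
  by apply: rank_mul_ker_eq; apply: eqmx_sym.
have le x : (dq M x <= dq N (f x))%N.
  rewrite /dq rk mulmxA c2 -mulmxA; apply: mxrankM_maxr.
apply: (pointwise_eq (b := fun x => dq N (f x))) => //.
rewrite (sum_bij (dq N) bf) !dq_sum //.
rewrite -[cokermx SM]mul1mx rk mul1mx.
apply: mxrankS.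
rewrite -[cokermx SN]mul1mx.
apply: submx_trans (submxMr _ c3) _.
by rewrite addsmxMr mulmx_coker addsmx0 mulmxA mulmx1.
Qed.

End Q.

Section C.
Variable k : fieldType.

Lemma rank_unit_mull n m (C : 'M[k]_n) (T : 'M[k]_(n,m)) :
  C \in unitmx -> \rank (C *m T) = \rank T.
Proof.
move=> uC; apply/eqP; rewrite eqn_leq mxrankM_maxr /=.
by rewrite -{1}[T](mulKmx uC) mxrankM_maxr.
Qed.

Definition isomx n n' (A : 'M[k]_n) (A' : 'M[k]_n') : 'M[k]_(n,n') :=
  invmx (row_ebase A) *m pid_mx (\rank A) *m row_ebase A'.

Lemma isomxP n n' (A : 'M[k]_n) (A' : 'M[k]_n') : \rank A = \rank A' ->
  (A *m isomx A A' <= A')%MS /\ \rank (A *m isomx A A') = \rank A.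
Proof.
move=> eqr; rewrite /isomx.
set r := \rank A.
have rn : (r <= n)%N by apply: rank_leq_col.
have rn' : (r <= n')%N by rewrite /r eqr; apply: rank_leq_col.
set T := (pid_mx r : 'M[k]_(n,n')) *m row_ebase A'.
have eAX : A *m (invmx (row_ebase A) *m pid_mx r *m row_ebase A') = col_ebase A *m T.
  rewrite -{1}(mulmx_ebase A) -!mulmxA; congr (_ *m _).
  rewrite [row_ebase A *m _]mulmxA mulmxV ?row_ebase_unit // mul1mx.
  by rewrite mulmxA mul_pid_mx minnn (minn_idPr rn).
rewrite eAX; split.
  apply: submx_trans (submxMl _ _) _.
  have -> : T = (pid_mx r : 'M[k]_(n,n')) *m (pid_mx (\rank A') *m row_ebase A').
    by rewrite mulmxA mul_pid_mx -eqr minnn (minn_idPr rn').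
  apply: submx_trans (submxMl _ _) _.
  have eA' := mulmx_ebase A'.
  rewrite -mulmxA in eA'.
  have -> : (pid_mx (\rank A') *m row_ebase A' : 'M[k]_n') = invmx (col_ebase A') *m A'.
    by apply/esym; rewrite -[X in invmx _ *m X]eA' mulKmx ?col_ebase_unit.
  exact: submxMl.
rewrite rank_unit_mull ?col_ebase_unit // /T mxrankMfree ?row_free_unit ?row_ebase_unit //.
exact: rank_pid_mx.
Qed.

Lemma isomx_inj n n' (A : 'M[k]_n) (A' : 'M[k]_n') m (w : 'M[k]_(m,n)) :
  \rank A = \rank A' -> (w <= A)%MS -> w *m isomx A A' = 0 -> w = 0.
Proof.
move=> eqr wA w0; have [_ rk] := isomxP eqr.
have := mxrank_mul_ker A (isomx A A'); rewrite rk -{2}[\rank A]addn0 => /eqP.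
rewrite eqn_add2l mxrank_eq0 => /eqP Z.
by apply/eqP; rewrite -submx0 -Z sub_capmx wA sub_kermx w0 /=.
Qed.

Lemma capP n (P S : 'M[k]_n) :
  P *m P = P -> (S *m P <= S)%MS -> (P :&: S :=: S *m P)%MS.
Proof.
move=> PP sS; apply/eqmxP/andP; split.
  have ZP : (P :&: S)%MS *m P = (P :&: S)%MS by apply: idem_sub => //; apply: capmxSl.
  by rewrite -ZP submxMr // capmxSr.
by rewrite sub_capmx submxMl sS.
Qed.

Lemma diff_cap0 n (P S : 'M[k]_n) : ((P :\: S) :&: (P :&: S) = 0)%MS.
Proof.
apply/eqP; rewrite -submx0 -(capmx_diff P S).
by apply: capmxS => //; apply: capmxSr.
Qed.

Lemma rank_diffq (X : finType) (Q : qmod k X) x :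
  goodq Q -> \rank (qop Q x :\: qsub Q)%MS = dq Q x.
Proof.
case=> gP sS; rewrite /dq lemK ?(good_idem _ gP) ?sS //.
have := mxrank_sum_cap (qop Q x :\: qsub Q)%MS (qop Q x :&: qsub Q)%MS.
rewrite diff_cap0 mxrank0 addn0.
rewrite (eqmx_rank (introT eqmxP (addsmx_diff_cap_eq _ _))).
rewrite (eqmx_rank (introT eqmxP (capP (good_idem _ gP) (sS x)))) => ->.
by rewrite addnK.
Qed.

End C.

Section C2.
Variable k : fieldType.

Lemma dq_qiso (I J : finType) (f : I -> J) (M : qmod k I) (N : qmod k J) :
  goodq M -> goodq N -> bijective f -> (forall x, dq M x = dq N (f x)) -> qiso f M N.
Proof.
move=> gM gN bf hd.
have [[gP sS] [gP' sS']] := (gM, gN).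
set P := qop M; set S := qsub M; set P' := qop N; set S' := qsub N.
pose U x := (P x :\: S)%MS; pose V x := (P x :&: S)%MS.
pose U' y := (P' y :\: S')%MS.
have [pr Hpr] : {pr : I -> 'M[k]_(qdim M) | forall x, pr x = proj_mx (U x) (V x)}.
  by exists (fun x => proj_mx (U x) (V x)).
have [X HX] : {X : I -> 'M[k]_(qdim M, qdim N) | forall x, X x = isomx (U x) (U' (f x))}.
  by exists (fun x => isomx (U x) (U' (f x))).

have rkU x : \rank (U x) = \rank (U' (f x)).
  by rewrite /U /U' !rank_diffq // hd.
have UV0 x : (U x :&: V x = 0)%MS by apply: diff_cap0.
have UP x : U x *m P x = U x.
  by apply: idem_sub; [exact: good_idem | exact: diffmxSl].
have Upi x : U x *m pr x = U x by rewrite Hpr; apply: proj_mx_id.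
have UX x : (U x *m X x <= U' (f x))%MS by rewrite HX; case: (isomxP (rkU x)).
have UXP x : U x *m X x *m P' (f x) = U x *m X x.
  apply: idem_sub; first exact: good_idem.
  by apply: submx_trans (UX x) _; apply: diffmxSl.
pose F := \sum_x P x *m pr x *m X x *m P' (f x).
have finj := bij_inj bf.
have PF x : P x *m F = P x *m pr x *m X x *m P' (f x).
  rewrite /F mulmx_sumr (bigD1 x) //= big1 ?addr0.
    by rewrite !mulmxA good_idem.
  by move=> y nyx; rewrite !mulmxA good_orth 1?eq_sym // !mul0mx.
have FP x : F *m P' (f x) = P x *m pr x *m X x *m P' (f x).
  rewrite /F mulmx_suml (bigD1 x) //= big1 ?addr0.
    by rewrite -mulmxA good_idem.
  move=> y nyx; rewrite -mulmxA good_orth ?mulmx0 //.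
  by apply: contra nyx => /eqP /finj ->.
exists F; split.
-
  have -> : S *m F = 0.
    rewrite /F mulmx_sumr big1 // => x _.
    have Spi : S *m P x *m pr x = 0.
      by rewrite Hpr; apply: proj_mx_0 => //; rewrite sub_capmx submxMl sS.
    by rewrite mulmxA [S *m _]mulmxA [S *m _]mulmxA Spi !mul0mx.
  exact: sub0mx.
- by move=> x; rewrite -/P -/P' PF FP.
-
  case: gP' => _ sum1.
  rewrite -sum1; apply: summx_sub => y _.
  have [g fg gf] := bf.
  rewrite -(gf y).
  set x := g y.
  apply: submx_trans (_ : (U' (f x) + (P' (f x) :&: S') <= _)%MS).
    by rewrite addsmx_diff_cap_eq.
  rewrite addsmx_sub; apply/andP; split; last first.
    by apply: submx_trans (addsmxSr _ _); apply: capmxSr.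
  apply: submx_trans (addsmxSl _ _).
  have [sUX rkUX] := isomxP (rkU x); rewrite -HX in sUX rkUX.
  have : (U' (f x) <= U x *m X x)%MS.
    by have /mxrank_leqif_sup/leqifP := sUX; rewrite rkUX rkU ltnn; case: ifP.
  move/submx_trans; apply.
  have -> : U x *m X x = U x *m F.
    by apply/esym; rewrite -{1}(UP x) -mulmxA PF !mulmxA UP Upi UXP.
  exact: submxMl.
-
  move=> v vF.
  rewrite -[v]mulmx1; case: gP => _ <-; rewrite mulmx_sumr.
  apply: summx_sub => x _.
  set w := v *m P x *m pr x.
  have wU : (w <= U x)%MS by rewrite /w Hpr; apply: proj_mx_sub.
  have wX : w *m X x = 0.
    apply/eqP; rewrite -submx0 -(capmx_diff (P' (f x)) S') sub_capmx.
    apply/andP; split; first by apply: submx_trans (submxMr _ wU) (UX x).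
    have wXP : w *m X x *m P' (f x) = w *m X x.
      apply: idem_sub; first exact: good_idem.
      apply: submx_trans (submxMr _ wU) _; apply: submx_trans (UX x) _; exact: diffmxSl.
    have -> : w *m X x = v *m F *m P' (f x).
      by rewrite -mulmxA FP -wXP /w !mulmxA.
    by apply: submx_trans (submxMr _ vF) (sS' _).
  have w0 : w = 0 by have := isomx_inj (rkU x) wU; rewrite -HX; apply.
  have : (v *m P x - w <= V x)%MS.
    rewrite /w Hpr; apply: proj_mx_compl_sub.
    by rewrite /U /V addsmx_diff_cap_eq submxMl.
  by rewrite w0 subr0 => /submx_trans; apply; apply: capmxSr.
Qed.

End C2.

Section F.
Variable k : fieldType.

Lemma fact_delta (X : finType) (M : fmod k X) x :
  fact M [ffun z => (z == x)%:R] = fop M x.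
Proof.
rewrite /fact (bigD1 x) //= big1 ?addr0; first by rewrite ffunE eqxx scale1r.
by move=> y nyx; rewrite ffunE (negPf nyx) scale0r.
Qed.

Lemma fmod_good (X : finType) (M : fmod k X) : is_fmod M -> good (fop M).
Proof.
case=> hm h1; split; last by rewrite -h1 /fact; apply: eq_bigr => x _; rewrite ffunE scale1r.
move=> x y; rewrite -!fact_delta -hm.
case: (eqVneq x y) => [<-|nxy].
  by congr fact; apply/ffunP => z; rewrite !ffunE; case: (z == x); rewrite ?mulr1 ?mulr0.
rewrite /fact big1 // => z _; rewrite !ffunE.
case: (eqVneq z x) => [->|]; last by move=> _; rewrite mul0r scale0r.
by rewrite (negPf nxy) mulr0 scale0r.
Qed.

Lemma good_fmod (X : finType) (M : fmod k X) : good (fop M) -> is_fmod M.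
Proof.
move=> gP; split; last first.
  by case: gP => _ <-; rewrite /fact; apply: eq_bigr => x _; rewrite ffunE scale1r.
move=> f g; rewrite /fact mulmx_suml; apply: eq_bigr => x _.
rewrite ffunE -scalemxAl mulmx_sumr (bigD1 x) //= big1 ?addr0.
  by rewrite -scalemxAr good_idem // scalerA.
by move=> y nyx; rewrite -scalemxAr good_orth 1?eq_sym // scaler0.
Qed.

Section Fam.
Variables (n : nat) (C : finType) (P : C -> 'M[k]_n).
Hypothesis gP : good P.

Definition sumP (p : pred C) := \sum_(c | p c) P c.

Lemma sumP_mulr (p : pred C) c : sumP p *m P c = if p c then P c else 0.
Proof.
rewrite /sumP mulmx_suml; case: ifP => pc.
  rewrite (bigD1 c) //= big1 ?addr0 ?good_idem // => d /andP[_ ndc].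
  exact: good_orth.
by rewrite big1 // => d pd; apply: (good_orth gP); apply/eqP => edc; move: pc; rewrite -edc pd.
Qed.

Lemma sumP_mull (p : pred C) c : P c *m sumP p = if p c then P c else 0.
Proof.
rewrite /sumP mulmx_sumr; case: ifP => pc.
  rewrite (bigD1 c) //= big1 ?addr0 ?good_idem // => d /andP[_ ndc].
  by apply: (good_orth gP); rewrite eq_sym.
by rewrite big1 // => d pd; apply: (good_orth gP); apply/eqP => edc; move: pc; rewrite edc pd.
Qed.

Lemma sumP_mul (p q : pred C) : sumP p *m sumP q = sumP [pred c | p c && q c].
Proof.
rewrite [X in X *m _]/sumP mulmx_suml big_mkcond [RHS]big_mkcond /=.
apply: eq_bigr => c _; rewrite sumP_mull.
by case: (p c); case: (q c).
Qed.

Lemma sumP_rank (p : pred C) : \rank (sumP p) = (\sum_(c | p c) \rank (P c))%N.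
Proof.
rewrite (lemD (W := sumP p) gP).
  rewrite [RHS]big_mkcond /=; apply: eq_bigr => c _.
  by rewrite sumP_mulr; case: (p c); rewrite ?mxrank0.
move=> c; rewrite sumP_mulr; case: ifP => pc; last exact: sub0mx.
by have := sumP_mull p c; rewrite pc => <-; apply: submxMl.
Qed.

Lemma good_coarse (W : finType) (h : C -> W) :
  good (fun w => sumP [pred c | h c == w]).
Proof.
split.
  move=> w w'; rewrite sumP_mul; case: eqP => [<-|nww].
    by rewrite /sumP; apply: eq_bigl => c /=; rewrite andbb.
  rewrite /sumP big_pred0 // => c /=; apply/negP => /andP[/eqP e1 /eqP e2].
  by apply: nww; rewrite -e1 -e2.
transitivity (\sum_c P c); last by case: gP.
rewrite [RHS](partition_big h xpredT) //=.
Qed.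

End Fam.

Lemma good_reindex n (X Y : finType) (P : X -> 'M[k]_n) (g : Y -> X) :
  good P -> bijective g -> good (fun y => P (g y)).
Proof.
move=> [h1 h2] bg; split.
  move=> x y; rewrite h1 (inj_eq (bij_inj bg)) //.
by rewrite -h2 (reindex g) //; apply: onW_bij.
Qed.

End F.

Section T.
Variable k : fieldType.

Lemma tens_suml m n p q (I : finType) (r : pred I) (A : I -> 'M[k]_(m,n)) (B : 'M[k]_(p,q)) :
  (\sum_(i | r i) A i) *t B = \sum_(i | r i) (A i *t B).
Proof.
apply/matrixP => i j; rewrite mxE !summxE mulr_suml; apply: eq_bigr => c _.
by rewrite mxE.
Qed.

Lemma tens_sumr m n p q (I : finType) (r : pred I) (A : 'M[k]_(m,n)) (B : I -> 'M[k]_(p,q)) :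
  A *t (\sum_(i | r i) B i) = \sum_(i | r i) (A *t B i).
Proof.
apply/matrixP => i j; rewrite mxE !summxE mulr_sumr; apply: eq_bigr => c _.
by rewrite mxE.
Qed.

Lemma tens_scalel m n p q a (A : 'M[k]_(m,n)) (B : 'M[k]_(p,q)) :
  (a *: A) *t B = a *: (A *t B).
Proof. by apply/matrixP => i j; rewrite !mxE mulrA. Qed.

Lemma tens_scaler m n p q a (A : 'M[k]_(m,n)) (B : 'M[k]_(p,q)) :
  A *t (a *: B) = a *: (A *t B).
Proof. by apply/matrixP => i j; rewrite !mxE mulrCA. Qed.

Lemma tens11 m n : (1%:M : 'M[k]_m) *t (1%:M : 'M[k]_n) = 1%:M.
Proof.
apply/matrixP => i j.
case: (mxtens_indexP i) => i1 i2; case: (mxtens_indexP j) => j1 j2.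
rewrite tensmxE !mxE (inj_eq (can_inj (@mxtens_indexK _ _))) xpair_eqE.
by case: (i1 == j1); case: (i2 == j2); rewrite ?mulr1n ?mulr0n ?mul1r ?mul0r.
Qed.

Lemma good_tens m n (X Y : finType) (P : X -> 'M[k]_m) (Q : Y -> 'M[k]_n) :
  good P -> good Q -> good (fun c : X * Y => P c.1 *t Q c.2).
Proof.
move=> [hP sP] [hQ sQ]; split.
  move=> [x y] [x' y'] /=; rewrite tensmx_mul hP hQ xpair_eqE.
  by case: (x == x'); case: (y == y'); rewrite ?tens0mx ?tensmx0.
rewrite -(pair_big xpredT xpredT (fun x y => P x *t Q y)) /=.
under eq_bigr => x _ do rewrite -tens_sumr sQ.
by rewrite -tens_suml sP tens11.
Qed.

Lemma good_delta m : good (fun i : 'I_m => (delta_mx i i : 'M[k]_m)).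
Proof.
split; last by rewrite -mx1_sum_delta.
move=> i j; rewrite mul_delta_mx_cond.
by case: eqP => [->|_]; rewrite ?mulr1n ?mulr0n.
Qed.

Lemma pid_sum_delta m r :
  (pid_mx r : 'M[k]_m) = \sum_(i < m | (i < r)%N) delta_mx i i.
Proof.
apply/matrixP => i j; rewrite summxE !mxE.
case: (boolP (i < r)%N) => ir.
  rewrite (bigD1 i) //= mxE eqxx /= big1 ?addr0.
    by rewrite andbT val_eqE eq_sym.
  by move=> l /andP[_ nli]; rewrite mxE eq_sym (negPf nli).
rewrite andbF big1 // => l lr; rewrite mxE.
case: (eqVneq i l) => [eil|]; last by [].
by move: ir; rewrite eil lr.
Qed.

Lemma sum_lt_ord m r : (r <= m)%N -> (\sum_(i < m | (i < r)%N) 1)%N = r.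
Proof.
move=> rm.
have := sumP_rank (good_delta m) (fun i : 'I_m => (i < r)%N).
rewrite /sumP -pid_sum_delta rank_pid_mx // => h.
by apply: esym; apply: etrans h _; apply: eq_bigr => i _; rewrite mxrank_delta.
Qed.

Lemma tens_delta m n (i : 'I_m) (j : 'I_n) :
  (delta_mx i i : 'M[k]_m) *t (delta_mx j j : 'M[k]_n) =
  delta_mx (mxtens_index (i, j)) (mxtens_index (i, j)).
Proof.
apply/matrixP => a b.
case: (mxtens_indexP a) => a1 a2; case: (mxtens_indexP b) => b1 b2.
rewrite tensmxE !mxE !(inj_eq (can_inj (@mxtens_indexK _ _))) !xpair_eqE.
by rewrite -natrM mulnb; case: (a1 == i); case: (a2 == j); case: (b1 == i); case: (b2 == j).
Qed.

Lemma rank_tens_pid m n r s : (r <= m)%N -> (s <= n)%N ->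
  \rank ((pid_mx r : 'M[k]_m) *t (pid_mx s : 'M[k]_n)) = (r * s)%N.
Proof.
move=> rm sn.
have bu : bijective (@mxtens_unindex m n).
  by exists (@mxtens_index m n); [exact: mxtens_unindexK | exact: mxtens_indexK].
rewrite !pid_sum_delta tens_suml.
under eq_bigr => i _ do rewrite tens_sumr.
rewrite pair_big /=.
under eq_bigr => c _ do rewrite tens_delta.
rewrite (reindex _ (onW_bij _ bu)).
rewrite (eq_bigr (fun l => delta_mx l l)); last first.
  by move=> l _; rewrite -surjective_pairing mxtens_unindexK.
have := sumP_rank (good_delta (m * n)) (fun l => ((mxtens_unindex l).1 < r)%N && ((mxtens_unindex l).2 < s)%N).
rewrite /sumP => ->.
under eq_bigr => l _ do rewrite mxrank_delta.
rewrite big_mkcond /=.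
rewrite (sum_bij (fun c : 'I_m * 'I_n => if (c.1 < r)%N && (c.2 < s)%N then 1%N else 0%N) bu).
rewrite -big_mkcond /=.
rewrite -(pair_big (fun i : 'I_m => (i < r)%N) (fun j : 'I_n => (j < s)%N) (fun _ _ => 1%N)) /=.
under eq_bigr => i _ do rewrite sum_lt_ord //.
by rewrite -[s]mul1n -big_distrl /= sum_lt_ord // mul1n.
Qed.

Lemma rank_tens m n (A : 'M[k]_m) (B : 'M[k]_n) :
  \rank (A *t B) = (\rank A * \rank B)%N.
Proof.
case: m A => [|m] A.
  have rA : \rank A = 0%N by apply/eqP; rewrite -leqn0; exact: rank_leq_row.
  have := rank_leq_row (A *t B); rewrite leqn0 => /eqP ->.
  by rewrite rA.
case: n B => [|n] B.
  have rB : \rank B = 0%N by apply/eqP; rewrite -leqn0; exact: rank_leq_row.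
  have h := rank_leq_row (A *t B); rewrite [X in (_ <= X)%N]muln0 leqn0 in h.
  move/eqP: h => ->.
  by rewrite rB muln0.
rewrite -{1}(mulmx_ebase A) -{1}(mulmx_ebase B) -tensmx_mul -tensmx_mul -mulmxA.
rewrite rank_unit_mull; last by apply: tensmx_unit; rewrite ?col_ebase_unit.
rewrite mxrankMfree; last by rewrite row_free_unit; apply: tensmx_unit; rewrite ?row_ebase_unit.
by apply: rank_tens_pid; apply: rank_leq_row.
Qed.

End T.

Lemma sum_fst (V : nmodType) (A B : finType) x (F : A * B -> V) :
  \sum_(b : B) F (x, b) = \sum_(a | a.1 == x) F a.
Proof.
transitivity (\sum_(a | a == x) \sum_(b : B) F (a, b)).
  by rewrite (big_pred1 x).
rewrite pair_big /=; apply: eq_big => [p|p _]; first by rewrite andbT.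
by rewrite -surjective_pairing.
Qed.

Lemma sum_snd (V : nmodType) (A B : finType) y (F : A * B -> V) :
  \sum_(a : A) F (a, y) = \sum_(c | c.2 == y) F c.
Proof.
transitivity (\sum_(a : A) \sum_(b | b == y) F (a, b)).
  by apply: eq_bigr => a _; rewrite (big_pred1 y).
rewrite pair_big /=; apply: eq_big => [p|p _]; first by [].
by rewrite -surjective_pairing.
Qed.

Lemma sum_chain (L Mi R : finType) (a : L * Mi -> nat) (b : Mi * R -> nat) x z :
  (\sum_(c : (L * Mi) * (Mi * R) | ((c.1.1, c.2.2) == (x, z)) && (c.1.2 == c.2.1))
     (a c.1 * b c.2))%N = (\sum_y a (x, y) * b (y, z))%N.
Proof.
rewrite (eq_bigl (fun c => (c.1.1 == x) && ((c.2.2 == z) && (c.1.2 == c.2.1)))); last first.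
  by move=> c; rewrite xpair_eqE andbA.
transitivity (\sum_(u : L * Mi | u.1 == x) \sum_(v : Mi * R | (v.2 == z) && (u.2 == v.1))
    (a u * b v))%N.
  by rewrite pair_big_dep.
rewrite [RHS](sum_fst x (fun u => a u * b (u.2, z))%N); apply: eq_bigr => u _.
rewrite (big_pred1 (u.2, z)) // => v /=.
by case: v => v1 v2; rewrite /= xpair_eqE andbC eq_sym.
Qed.

Section TO.
Variable k : fieldType.

Lemma good_ext n (X : finType) (P Q : X -> 'M[k]_n) :
  (forall x, P x = Q x) -> good P -> good Q.
Proof.
move=> e [h1 h2]; split; first by move=> x y; rewrite -!e.
by rewrite -h2; apply: eq_bigr => x _; rewrite e.
Qed.

Lemma ifsub_scale n m (A : 'M[k]_(n,m)) (b b' : bool) :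
  (if b then A else 0) - (if b' then A else 0) = ((b%:R - b'%:R) : k) *: A.
Proof.
by case: b; case: b'; rewrite ?subrr ?scale0r ?subr0 ?scale1r ?sub0r ?scaleN1r.
Qed.

Lemma tens_over_spec (L Mi R : finType) (M : fmod k (L * Mi)%type) (N : fmod k (Mi * R)%type) :
  good (fop M) -> good (fop N) ->
  goodq (tens_over M N) /\
  forall x z, dq (tens_over M N) (x, z) =
              (\sum_y \rank (fop M (x, y)) * \rank (fop N (y, z)))%N.
Proof.
move=> gM gN.
pose Pi := fun c : ((L * Mi) * (Mi * R))%type => fop M c.1 *t fop N c.2.
have gPi : good Pi := good_tens gM gN.
pose h := fun c : ((L * Mi) * (Mi * R))%type => (c.1.1, c.2.2).
have tsp (p : pred (L * Mi)%type) (q : pred (Mi * R)%type) :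
    (\sum_(a | p a) fop M a) *t (\sum_(b | q b) fop N b) = sumP Pi [pred c | p c.1 && q c.2].
  rewrite tens_suml; under eq_bigr => a _ do rewrite tens_sumr.
  by rewrite pair_big.
have eQ w : qop (tens_over M N) w = sumP Pi [pred c | h c == w].
  case: w => x z; rewrite /= /lact /ract sum_fst sum_snd tsp.
  by apply: eq_bigl => c; rewrite /h /= xpair_eqE.
have eT y : ract M y *t 1%:M - 1%:M *t lact N y =
            sumP Pi [pred c | c.1.2 == y] - sumP Pi [pred c | c.2.1 == y].
  case: gM => _ sM; case: gN => _ sN.
  rewrite /ract /lact -{1}sN -{1}sM sum_snd sum_fst.
  rewrite -[X in _ *t X - _](big_filter _ xpredT) -[X in _ - X *t _](big_filter _ xpredT).
  rewrite !big_filter !tsp.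
  by congr (_ - _); apply: eq_bigl => c /=; rewrite ?andbT.
have comm (p q : pred (((L * Mi) * (Mi * R))%type)) : sumP Pi p *m sumP Pi q = sumP Pi q *m sumP Pi p.
  by rewrite !sumP_mul //; apply: eq_bigl => c /=; rewrite andbC.
have TQ y w : (ract M y *t 1%:M - 1%:M *t lact N y) *m sumP Pi [pred c | h c == w] =
              sumP Pi [pred c | h c == w] *m (ract M y *t 1%:M - 1%:M *t lact N y).
  by rewrite eT mulmxBl mulmxBr comm [X in _ = _ - X]comm.
have TPi y c : (ract M y *t 1%:M - 1%:M *t lact N y) *m Pi c =
    ((c.1.2 == y)%:R - (c.2.1 == y)%:R) *: Pi c.
  by rewrite eT mulmxBl !sumP_mulr //= ifsub_scale.
have PiT y c : Pi c *m (ract M y *t 1%:M - 1%:M *t lact N y) =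
    ((c.1.2 == y)%:R - (c.2.1 == y)%:R) *: Pi c.
  by rewrite eT mulmxBr !sumP_mull //= ifsub_scale.
set S := qsub (tens_over M N).
have SQ w : (S *m sumP Pi [pred c | h c == w] <= S)%MS.
  rewrite /S /= sumsmxMr; apply/sumsmx_subP => y _; rewrite TQ.
  by apply: submx_trans (submxMl _ _) _; apply: (sumsmx_sup y).
have SPi c : (S *m Pi c <= S)%MS.
  rewrite /S /= sumsmxMr; apply/sumsmx_subP => y _; rewrite TPi -PiT.
  by apply: submx_trans (submxMl _ _) _; apply: (sumsmx_sup y).
have gq : goodq (tens_over M N).
  split.
    by have := good_coarse gPi h; apply: good_ext => w; rewrite -(eQ w).
  by move=> w; rewrite eQ.
split=> // x z.
rewrite /dq eQ lemK ?SQ //; last exact: (good_idem (P := fun w => sumP Pi [pred c | h c == w]) (x, z) (good_coarse gPi h)).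
rewrite sumP_rank //.
rewrite (lemD (W := S *m sumP Pi [pred c | h c == (x, z)]) gPi); last first.
  move=> c; rewrite -mulmxA sumP_mulr //.
  case: ifP => hc; last by rewrite mulmx0 sub0mx.
  have e : Pi c *m sumP Pi [pred c | h c == (x, z)] = Pi c by rewrite sumP_mull //; move: hc; rewrite /= => ->.
  by rewrite -e mulmxA submxMr.
have rSPi c : \rank (S *m Pi c) = if c.1.2 == c.2.1 then 0%N else \rank (Pi c).
  rewrite /S /= sumsmxMr.
  under eq_bigr => y _ do rewrite TPi.
  case: eqP => E.
    rewrite big1 ?mxrank0 // => y _.
    by rewrite E subrr scale0r.
  apply/eqmx_rank/andP; split.
    by apply/sumsmx_subP => y _; apply: scalemx_sub.
  apply: (sumsmx_sup c.1.2) => //.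
  rewrite eqxx; move/eqP/negPf: E; rewrite eq_sym => ->.
  by rewrite subr0 scale1r.
have rSQ c : \rank (S *m sumP Pi [pred c | h c == (x, z)] *m Pi c) =
    if (h c == (x, z)) && (c.1.2 != c.2.1) then \rank (Pi c) else 0%N.
  rewrite -mulmxA sumP_mulr //=.
  case: (h c == (x, z)); last by rewrite mulmx0 mxrank0.
  by rewrite rSPi /=; case: (c.1.2 == c.2.1).
under [X in (_ - X)%N]eq_bigr => c _ do rewrite rSQ.
rewrite big_mkcond /=.
rewrite -[X in (_ - X)%N]big_mkcond /=.
rewrite (bigID (fun c => c.1.2 == c.2.1)) /=.
have -> : (\sum_(i | (h i == (x, z)) && ~~ (i.1.2 == i.2.1)) \rank (Pi i))%N =
          (\sum_(i | (h i == (x, z)) && (i.1.2 != i.2.1)) \rank (Pi i))%N by [].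
have e1 : (\sum_(i | (h i == (x, z)) && (i.1.2 != i.2.1)) \rank (Pi i))%N =
          (\sum_(i | i.1.2 != i.2.1) (if h i == (x, z) then \rank (Pi i) else 0))%N.
  by rewrite -big_mkcondl; apply: eq_bigl => i; rewrite andbC.
rewrite e1 addnK -big_mkcondl.
rewrite -(sum_chain (fun a => \rank (fop M a)) (fun b => \rank (fop N b))).
apply: eq_big => c; first by rewrite andbC.
by rewrite /Pi rank_tens.
Qed.

End TO.

Section Mods.
Variable k : fieldType.

Lemma etens_good (L1 R1 L2 R2 : finType) (M : fmod k (L1 * R1)%type) (N : fmod k (L2 * R2)%type) :
  good (fop M) -> good (fop N) -> good (fop (etens M N)).
Proof.
move=> gM gN.
have := good_reindex (g := fun x : ((L1 * L2) * (R1 * R2))%type => ((x.1.1, x.2.1), (x.1.2, x.2.2)))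
  (good_tens gM gN).
apply.
by exists (fun y : ((L1 * R1) * (L2 * R2))%type => ((y.1.1, y.2.1), (y.1.2, y.2.2)));
  case=> [[a b] [c d]].
Qed.

Lemma etens_rank (L1 R1 L2 R2 : finType) (M : fmod k (L1 * R1)%type) (N : fmod k (L2 * R2)%type) l1 l2 r1 r2 :
  \rank (fop (etens M N) ((l1, l2), (r1, r2))) = (\rank (fop M (l1, r1)) * \rank (fop N (l2, r2)))%N.
Proof. exact: rank_tens. Qed.

Lemma regA_eq (G : finType) (x : (G * G)%type) :
  fop (regA k G) x = sumP (fun j : 'I_#|G| => (delta_mx j j : 'M[k]_#|G|))
                      [pred j | (enum_val j, enum_val j) == x].
Proof.
case: x => a b /=; rewrite /sumP.
case: (eqVneq a b) => [<-|nab].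
  rewrite (big_pred1 (enum_rank a)) // => j /=.
  rewrite xpair_eqE andbb; apply/eqP/eqP => [<-|->]; first by rewrite enum_valK.
  by rewrite enum_rankK.
rewrite big_pred0 // => j /=; rewrite xpair_eqE.
by apply/negP => /andP[/eqP e1 /eqP e2]; move: nab; rewrite -e1 -e2 eqxx.
Qed.

Lemma regA_good (G : finType) : good (fop (regA k G)).
Proof.
have := good_coarse (good_delta k #|G|) (fun j => (enum_val j, enum_val j)).
by apply: good_ext => x; rewrite regA_eq.
Qed.

Lemma regA_rank (G : finType) (a b : G) : \rank (fop (regA k G) (a, b)) = (a == b) :> nat.
Proof.
rewrite /= ; case: (a == b); last exact: mxrank0.
exact: mxrank_delta.
Qed.

Lemma as_right_good (G : finType) (E : fmod k G) : good (fop E) -> good (fop (as_right E)).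
Proof.
move=> gE; have := good_reindex (g := fun x : (unit * G)%type => x.2) gE; apply.
by exists (fun g => (tt, g)) => // [[[] g]].
Qed.

Lemma qmod_of_spec (X : finType) (M : fmod k X) :
  good (fop M) -> goodq (qmod_of M) /\ forall x, dq (qmod_of M) x = \rank (fop M x).
Proof.
move=> gM; split.
  by split => // x; rewrite /= mul0mx sub0mx.
move=> x; rewrite /dq lemK /= ?mul0mx ?sub0mx ?mxrank0 ?subn0 //.
exact: good_idem.
Qed.

End Mods.

Definition mseq (X : finType) (r : X -> nat) := flatten [seq nseq (r x) x | x <- enum X].

Lemma count_mseq (X : finType) (r : X -> nat) x : count (pred1 x) (mseq r) = r x.
Proof.
rewrite /mseq count_flatten -map_comp sumnE big_map big_enum /=.
rewrite (bigD1 x) //= count_nseq /= eqxx mul1n big1 ?addn0 // => y nyx.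
by rewrite count_nseq /= (negPf nyx).
Qed.

Section Model.
Variable k : fieldType.

Definition model (X : finType) (r : X -> nat) : fmod k X :=
  @FMod k X (size (mseq r))
    (fun x => sumP (fun j : 'I_(size (mseq r)) => (delta_mx j j : 'M[k]_(size (mseq r))))
                   [pred j | tnth (in_tuple (mseq r)) j == x]).

Lemma model_good (X : finType) (r : X -> nat) : good (fop (model r)).
Proof. exact: (good_coarse (good_delta k (size (mseq r))) (fun j => tnth (in_tuple (mseq r)) j)). Qed.

Lemma model_rank (X : finType) (r : X -> nat) x : \rank (fop (model r) x) = r x.
Proof.
rewrite /= sumP_rank; last exact: good_delta.
under eq_bigr => j _ do rewrite mxrank_delta.
rewrite -(big_tnth _ _ _ (fun y : X => y == x) (fun _ => 1%N)).
by rewrite sum1_count count_mseq.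
Qed.

End Model.

Lemma sum_eq_fst (A B : finType) (a : A) (f : A * B -> nat) :
  (\sum_(y : A * B) (a == y.1) * f y = \sum_b f (a, b))%N.
Proof.
transitivity (\sum_u \sum_v ((a == u) * f (u, v)))%N.
  by symmetry; rewrite pair_big /=; apply: eq_bigr => [[u v]] _.
rewrite (bigD1 a) //= [X in (_ + X)%N]big1 ?addn0.
  by apply: eq_bigr => b _; rewrite eqxx mul1n.
by move=> u nua; apply: big1 => v _; rewrite eq_sym (negPf nua).
Qed.

Lemma sum_eq_snd (A B : finType) (b : B) (f : A * B -> nat) :
  (\sum_(y : A * B) (b == y.2) * f y = \sum_a f (a, b))%N.
Proof.
transitivity (\sum_u \sum_v ((b == v) * f (u, v)))%N.
  by symmetry; rewrite pair_big /=; apply: eq_bigr => [[u v]] _.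
apply: eq_bigr => u _.
rewrite (bigD1 b) //= big1 ?addn0; first by rewrite eqxx mul1n.
by move=> v nvb; rewrite eq_sym (negPf nvb).
Qed.

Section Bij.
Variable G : finType.
Lemma assoc_bij : bijective (@assoc_idx G).
Proof.
exists (fun x : (((G * G) * G) * G)%type => ((x.1.1.1, (x.1.1.2, x.1.2)), x.2)).
  by case=> [[a [b c]] d].
by case=> [[[a b] c] d].
Qed.
Lemma lunit_bij : bijective (@lunit_idx G).
Proof.
exists (fun x : (G * G)%type => ((tt, x.1), x.2)); first by case=> [[[] a] b].
by case.
Qed.
Lemma runit_bij : bijective (@runit_idx G).
Proof.
exists (fun x : (G * G)%type => ((x.1, tt), x.2)); first by case=> [[a []] b].
by case.
Qed.
End Bij.

Section Ring.
Variable G : finType.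

Definition mulD (d : G -> G -> G -> nat) (a b : ZG G) : ZG G :=
  [ffun g => \sum_(h : G) \sum_(k0 : G) a h * b k0 * (d h k0 g)%:Z].

Lemma natz_sum (I : finType) (F : I -> nat) : ((\sum_i F i)%N)%:Z = \sum_i (F i)%:Z.
Proof. by rewrite (big_morph Posz PoszD (erefl 0%:Z)). Qed.

Lemma dsum_mull (F : G -> G -> int) x :
  (\sum_h \sum_k F h k) * x = \sum_h \sum_k (F h k * x).
Proof. by rewrite mulr_suml; apply: eq_bigr => h _; rewrite mulr_suml. Qed.

Lemma dsum_mulr (F : G -> G -> int) x :
  x * (\sum_h \sum_k F h k) = \sum_h \sum_k (x * F h k).
Proof. by rewrite mulr_sumr; apply: eq_bigr => h _; rewrite mulr_sumr. Qed.

Lemma perm4 (F : G -> G -> G -> G -> int) :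
  \sum_m \sum_l \sum_h \sum_k F m l h k = \sum_h \sum_k \sum_l \sum_m F m l h k.
Proof.
rewrite exchange_big /=.
under eq_bigr => l _ do rewrite exchange_big /=.
under eq_bigr => l _ do under eq_bigr => h _ do rewrite exchange_big /=.
rewrite exchange_big /=.
by under eq_bigr => h _ do rewrite exchange_big /=.
Qed.

Lemma perm3 (F : G -> G -> G -> int) :
  \sum_m \sum_k \sum_l F m k l = \sum_k \sum_l \sum_m F m k l.
Proof.
rewrite exchange_big /=.
by under eq_bigr => k _ do rewrite exchange_big /=.
Qed.

Lemma ring_of (d : G -> G -> G -> nat) (e : G -> nat) :
  (forall h k l g, (\sum_m d k l m * d h m g = \sum_m d h k m * d m l g)%N) ->
  (forall k g, (\sum_a e a * d a k g)%N = (k == g) :> nat) ->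
  (forall h g, (\sum_b e b * d h b g)%N = (h == g) :> nat) ->
  unital_ring_on (mulD d) [ffun g => (e g)%:Z].
Proof.
move=> hA hL hR.
have hAz h k l g : \sum_m (d k l m)%:Z * (d h m g)%:Z = \sum_m (d h k m)%:Z * (d m l g)%:Z.
  have := congr1 Posz (hA h k l g); rewrite !natz_sum.
  by under eq_bigr do rewrite PoszM; under [RHS]eq_bigr do rewrite PoszM.
split.
- move=> a b c; apply/ffunP => g; rewrite !ffunE -big_split; apply: eq_bigr => h _.
  rewrite -big_split; apply: eq_bigr => k _; by rewrite ffunE !mulrDl.
- move=> a b c; apply/ffunP => g; rewrite !ffunE -big_split; apply: eq_bigr => h _.
  rewrite -big_split; apply: eq_bigr => k _; by rewrite ffunE mulrDr !mulrDl.
- move=> a b c; apply/ffunP => g; rewrite !ffunE.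
  under eq_bigr => m _ do under eq_bigr => l _ do rewrite ffunE !dsum_mull.
  rewrite perm4.
  under [RHS]eq_bigr => h _ do under eq_bigr => m _ do rewrite ffunE dsum_mulr dsum_mull.
  under [RHS]eq_bigr => h _ do rewrite perm3.
  apply: eq_bigr => h _; apply: eq_bigr => k _; apply: eq_bigr => l _.
  transitivity (\sum_m a h * b k * c l * ((d h k m)%:Z * (d m l g)%:Z)).
    by apply: eq_bigr => m _; ring.
  transitivity (\sum_m a h * b k * c l * ((d k l m)%:Z * (d h m g)%:Z)); last first.
    by apply: eq_bigr => m _; ring.
  by rewrite -!mulr_sumr hAz.
- move=> a; apply/ffunP => g; rewrite !ffunE.
  rewrite exchange_big /=.
  transitivity (\sum_k a k * ((\sum_h e h * d h k g)%N)%:Z).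
    apply: eq_bigr => k _; rewrite natz_sum mulr_sumr; apply: eq_bigr => h _.
    by rewrite ffunE PoszM; ring.
  rewrite (bigD1 g) //= [X in _ + X]big1 ?addr0; first by rewrite hL eqxx mulr1.
  by move=> k nkg; rewrite hL (negPf nkg) mulr0.
- move=> a; apply/ffunP => g; rewrite !ffunE.
  transitivity (\sum_h a h * ((\sum_k e k * d h k g)%N)%:Z).
    apply: eq_bigr => h _; rewrite natz_sum mulr_sumr; apply: eq_bigr => k _.
    by rewrite ffunE PoszM; ring.
  rewrite (bigD1 g) //= [X in _ + X]big1 ?addr0; first by rewrite hR eqxx mulr1.
  by move=> k nkg; rewrite hR (negPf nkg) mulr0.
Qed.

End Ring.

Section Exp.
Variable G : finType.

Lemma add_mulz (f : ZG G -> ZG G) : (forall x y, f (x + y) = f x + f y) ->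
  forall x z, f (x *~ z) = f x *~ z.
Proof.
move=> fD.
have f0 : f 0 = 0 by apply: (addrI (f 0)); rewrite -fD !addr0.
have fN x : f (- x) = - f x by apply: (addrI (f x)); rewrite -fD !subrr.
have fn x n : f (x *+ n) = f x *+ n.
  by elim: n => [|n IH]; rewrite ?mulr0n // !mulrS fD IH.
move=> x [n|n]; first by rewrite -!pmulrn fn.
by rewrite NegzE !mulrNz fN -!pmulrn fn.
Qed.

Lemma add_sum (f : ZG G -> ZG G) : (forall x y, f (x + y) = f x + f y) ->
  forall (F : G -> ZG G), f (\sum_h F h) = \sum_h f (F h).
Proof.
move=> fD F.
have f0 : f 0 = 0 by apply: (addrI (f 0)); rewrite -fD !addr0.
exact: (big_morph f fD f0).
Qed.

Lemma decomp (a : ZG G) : a = \sum_h gbasis h *~ a h.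
Proof.
apply/ffunP => g; rewrite sum_ffunE (bigD1 g) //= big1 ?addr0.
  by rewrite ffunMzE ffunE eqxx mulrzz mul1r.
by move=> h nhg; rewrite ffunMzE ffunE eq_sym (negPf nhg) mulrzz mul0r.
Qed.

Lemma expand (mul : ZG G -> ZG G -> ZG G) :
  (forall a b c, mul (a + b) c = mul a c + mul b c) ->
  (forall a b c, mul a (b + c) = mul a b + mul a c) ->
  forall a b g, mul a b g = \sum_h \sum_k a h * b k * mul (gbasis h) (gbasis k) g.
Proof.
move=> hl hr a b g.
rewrite {1}[a]decomp (add_sum (f := mul^~ b)) ?sum_ffunE; last by move=> x y; apply: hl.
apply: eq_bigr => h _.
rewrite (add_mulz (f := mul^~ b)) ?ffunMzE; last by move=> x y; apply: hl.
rewrite {1}[b]decomp (add_sum (f := mul (gbasis h))) ?sum_ffunE; last by move=> x y; apply: hr.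
rewrite mulrzz mulr_suml; apply: eq_bigr => k _.
rewrite (add_mulz (f := mul (gbasis h))) ?ffunMzE; last by move=> x y; apply: hr.
by rewrite mulrzz; ring.
Qed.

End Exp.

Section Form.
Variables (k : fieldType) (G : finType).

Lemma etens_rank2 (L1 R1 L2 R2 : finType) (M : fmod k (L1 * R1)%type) (N : fmod k (L2 * R2)%type) x :
  \rank (fop (etens M N) x) = (\rank (fop M (x.1.1, x.2.1)) * \rank (fop N (x.1.2, x.2.2)))%N.
Proof. exact: rank_tens. Qed.

Variables (D : fmod k ((G * G) * G)%type) (E : fmod k G).
Hypotheses (gD : good (fop D)) (gE : good (fop E)).

Lemma F1 : goodq (tens_over (etens (regA k G) D) D) /\
  forall h k0 l g, dq (tens_over (etens (regA k G) D) D) ((h, (k0, l)), g) =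
                   (\sum_m dcoef D k0 l m * dcoef D h m g)%N.
Proof.
have [gq dqf] := tens_over_spec (etens_good (regA_good k G) gD) gD.
split => // h k0 l g; rewrite dqf.
under eq_bigr => y _ do rewrite etens_rank2 /= regA_rank -mulnA.
by rewrite (sum_eq_fst h (fun y => \rank (fop D ((k0, l), y.2)) * \rank (fop D (y, g)))%N).
Qed.

Lemma F2 : goodq (tens_over (etens D (regA k G)) D) /\
  forall h k0 l g, dq (tens_over (etens D (regA k G)) D) (((h, k0), l), g) =
                   (\sum_m dcoef D h k0 m * dcoef D m l g)%N.
Proof.
have [gq dqf] := tens_over_spec (etens_good gD (regA_good k G)) gD.
split => // h k0 l g; rewrite dqf.
under eq_bigr => y _ do rewrite etens_rank2 /= regA_rank [(_ * (_ == _))%N]mulnC -mulnA.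
by rewrite (sum_eq_snd l (fun y => \rank (fop D ((h, k0), y.1)) * \rank (fop D (y, g)))%N).
Qed.

Lemma F3 : goodq (tens_over (etens (as_right E) (regA k G)) D) /\
  forall k0 g, dq (tens_over (etens (as_right E) (regA k G)) D) ((tt, k0), g) =
               (\sum_a ecoef E a * dcoef D a k0 g)%N.
Proof.
have [gq dqf] := tens_over_spec (etens_good (as_right_good gE) (regA_good k G)) gD.
split => // k0 g; rewrite dqf.
under eq_bigr => y _ do rewrite etens_rank2 /= regA_rank [(_ * (_ == _))%N]mulnC -mulnA.
by rewrite (sum_eq_snd k0 (fun y => \rank (fop E y.1) * \rank (fop D (y, g)))%N).
Qed.

Lemma F4 : goodq (tens_over (etens (regA k G) (as_right E)) D) /\
  forall h g, dq (tens_over (etens (regA k G) (as_right E)) D) ((h, tt), g) =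
               (\sum_b ecoef E b * dcoef D h b g)%N.
Proof.
have [gq dqf] := tens_over_spec (etens_good (regA_good k G) (as_right_good gE)) gD.
split => // h g; rewrite dqf.
under eq_bigr => y _ do rewrite etens_rank2 /= regA_rank -mulnA.
by rewrite (sum_eq_fst h (fun y => \rank (fop E y.2) * \rank (fop D (y, g)))%N).
Qed.

End Form.

Lemma F5 (k : fieldType) (G : finType) : goodq (qmod_of (regA k G)) /\
  forall a b : G, dq (qmod_of (regA k G)) (a, b) = (a == b) :> nat.
Proof.
have [gq dqf] := qmod_of_spec (regA_good k G).
by split => // a b; rewrite dqf regA_rank.
Qed.

Lemma gbasis_r (G : finType) (F : G -> int) l : \sum_y F y * gbasis l y = F l.
Proof.
rewrite (bigD1 l) //= big1 ?addr0; first by rewrite ffunE eqxx mulr1.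
by move=> y nyl; rewrite ffunE (negPf nyl) mulr0.
Qed.

Lemma gbasis_l (G : finType) (F : G -> int) l : \sum_y gbasis l y * F y = F l.
Proof. by rewrite -[RHS](gbasis_r F l); apply: eq_bigr => y _; rewrite mulrC. Qed.

Lemma gb_inner (G : finType) (A B : G -> int) l : \sum_y A y * gbasis l y * B y = A l * B l.
Proof.
rewrite (bigD1 l) //= big1 ?addr0; first by rewrite ffunE eqxx mulr1.
by move=> y nyl; rewrite ffunE (negPf nyl) mulr0 mul0r.
Qed.

Lemma gb_outer (G : finType) (F : G -> int) (H : G -> G -> int) h :
  \sum_x \sum_y gbasis h x * F y * H x y = \sum_y F y * H h y.
Proof.
rewrite (bigD1 h) //= [X in _ + X]big1 ?addr0.
  by apply: eq_bigr => y _; rewrite ffunE eqxx mul1r.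
by move=> x nxh; apply: big1 => y _; rewrite ffunE (negPf nxh) !mul0r.
Qed.

Lemma Posz_inj : injective Posz.
Proof. by move=> x y []. Qed.

Theorem proposition6p1 (k : fieldType) (G : finType) :
  (forall (D : fmod k ((G * G) * G)%type) (E : fmod k G),
      sesquialgebra D E ->
      unital_ring_on (mul_of D) (unit_of E) /\ nonneg_consts (mul_of D) (unit_of E))
  /\
  (forall (mul : ZG G -> ZG G -> ZG G) (e : ZG G),
      unital_ring_on mul e -> nonneg_consts mul e ->
      exists (D : fmod k ((G * G) * G)%type) (E : fmod k G),
        [/\ sesquialgebra D E,
            forall h k0 g, mul (gbasis h) (gbasis k0) g = (dcoef D h k0 g)%:Z
          & forall g, e g = (ecoef E g)%:Z])
  /\
  (forall (D D' : fmod k ((G * G) * G)%type) (E E' : fmod k G),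
      sesquialgebra D E -> sesquialgebra D' E' ->
      (sesqui_iso D D' E E' <->
       ((forall h k0 g, dcoef D h k0 g = dcoef D' h k0 g) /\
        (forall g, ecoef E g = ecoef E' g)))).
Proof.
have bid (T : finType) : bijective (@id T) by exists id.
split; [|split].
- move=> D E [iD iE hA hL hR].
  have gD := fmod_good iD; have gE := fmod_good iE.
  have [g1 f1] := F1 gD; have [g2 f2] := F2 gD; have [g3 f3] := F3 gD gE.
  have [g4 f4] := F4 gD gE; have [g5 f5] := F5 k G.
  split.
    apply: (ring_of (d := dcoef D) (e := ecoef E)).
    + move=> h k0 l g.
      by have := qiso_dq g1 g2 (assoc_bij G) hA ((h, (k0, l)), g); rewrite f1 /= f2.
    + move=> k0 g.
      by have := qiso_dq g3 g5 (lunit_bij G) hL ((tt, k0), g); rewrite f3 /= f5.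
    + move=> h g.
      by have := qiso_dq g4 g5 (runit_bij G) hR ((h, tt), g); rewrite f4 /= f5.
  split => [h k0 g|g]; last by rewrite ffunE.
  rewrite ffunE; apply: sumr_ge0 => x _; apply: sumr_ge0 => y _.
  by rewrite !ffunE !mulr_ge0.
- move=> mul e [hl hr hA hL hR] [nn ne].
  pose c (x : ((G * G) * G)%type) : nat := `|mul (gbasis x.1.1) (gbasis x.1.2) x.2|%N.
  pose ee (g : G) : nat := `|e g|%N.
  pose D := model k c; pose E := model k ee.
  have Pc x y g : mul (gbasis x) (gbasis y) g = (c ((x, y), g))%:Z by rewrite /c /= gez0_abs.
  have ec g : e g = (ee g)%:Z by rewrite /ee gez0_abs.
  have dc h k0 g : dcoef D h k0 g = c ((h, k0), g) by rewrite /dcoef model_rank.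
  have de g : ecoef E g = ee g by rewrite /ecoef model_rank.
  have ex := expand hl hr.
  have idA h k0 l g : (\sum_m c ((k0, l), m) * c ((h, m), g) = \sum_m c ((h, k0), m) * c ((m, l), g))%N.
    apply: Posz_inj; rewrite !natz_sum.
    have L1 : mul (mul (gbasis h) (gbasis k0)) (gbasis l) g =
              \sum_x mul (gbasis h) (gbasis k0) x * mul (gbasis x) (gbasis l) g.
      by rewrite ex; apply: eq_bigr => x _; exact: gb_inner.
    have R1 : mul (gbasis h) (mul (gbasis k0) (gbasis l)) g =
              \sum_y mul (gbasis k0) (gbasis l) y * mul (gbasis h) (gbasis y) g.
      by rewrite ex; exact: gb_outer.
    transitivity (\sum_y mul (gbasis k0) (gbasis l) y * mul (gbasis h) (gbasis y) g).
      by apply: eq_bigr => y _; rewrite !Pc PoszM.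
    rewrite -R1 -hA L1; apply: eq_bigr => y _; by rewrite !Pc PoszM.
  have idL k0 g : (\sum_a ee a * c ((a, k0), g))%N = (k0 == g) :> nat.
    apply: Posz_inj; rewrite natz_sum.
    have := congr1 (fun f : ZG G => f g) (hL (gbasis k0)); rewrite /= ex ffunE eq_sym.
    move=> <-; apply: eq_bigr => x _; rewrite gb_inner ec Pc PoszM //.
  have idR h g : (\sum_b ee b * c ((h, b), g))%N = (h == g) :> nat.
    apply: Posz_inj; rewrite natz_sum.
    have := congr1 (fun f : ZG G => f g) (hR (gbasis h)); rewrite /= ex ffunE eq_sym gb_outer.
    move=> <-; apply: eq_bigr => y _; rewrite ec Pc PoszM //.
  have gD := model_good k c; have gE := model_good k ee.
  have [g1 f1] := F1 gD; have [g2 f2] := F2 gD; have [g3 f3] := F3 gD gE.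
  have [g4 f4] := F4 gD gE; have [g5 f5] := F5 k G.
  exists D, E; split.
  + split.
    * exact: good_fmod.
    * exact: good_fmod.
    * apply: dq_qiso g1 g2 (assoc_bij G) _ => [[[h [k0 l]] g]].
      rewrite f1 /= f2.
      under eq_bigr => m _ do rewrite !dc.
      under [RHS]eq_bigr => m _ do rewrite !dc.
      exact: idA.
    * apply: dq_qiso g3 g5 (lunit_bij G) _ => [[[[] k0] g]].
      rewrite f3 /= f5.
      under eq_bigr => m _ do rewrite de dc.
      exact: idL.
    * apply: dq_qiso g4 g5 (runit_bij G) _ => [[[h []] g]].
      rewrite f4 /= f5.
      under eq_bigr => m _ do rewrite de dc.
      exact: idR.
  + by move=> h k0 g; rewrite Pc dc.
  + by move=> g; rewrite ec de.
- move=> D D' E E' [iD iE _ _ _] [iD' iE' _ _ _].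
  have [qD dD] := qmod_of_spec (fmod_good iD); have [qD' dD'] := qmod_of_spec (fmod_good iD').
  have [qE dE] := qmod_of_spec (fmod_good iE); have [qE' dE'] := qmod_of_spec (fmod_good iE').
  split.
    case=> [isD isE]; split => [h k0 g|g].
      by have := qiso_dq qD qD' (bid _) isD ((h, k0), g); rewrite dD dD'.
    by have := qiso_dq qE qE' (bid _) isE g; rewrite dE dE'.
  case=> [eD eE]; split; apply: dq_qiso => //.
    by case=> [[h k0] g]; rewrite dD dD' /=; apply: eD.
  by move=> g; rewrite dE dE'; apply: eE.
Qed.
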